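(* Let $n\ge3$ and let $\{e_{\alpha_i},f_{\alpha_i}\mid 1\leq i\leq n\}$ be Chevalley generators of the simple Lie algebra $\mathfrak{g}$ of type $D_n$, where the simple roots are labeled so that $\alpha_1,\alpha_2,\dots,\alpha_{n-1}$ form the chain $1-2-\cdots-(n-1)$ and $\alpha_n$ is joined (by a single bond) only to $\alpha_2$. Put $$E=[f_{\alpha_{n-1}},[\cdots,[f_{\alpha_2},f_{\alpha_n}]\cdots]],\qquad F=[[\cdots[e_{\alpha_n},e_{\alpha_2}],\cdots],e_{\alpha_{n-1}}].$$ Then there is a Lie algebra homomorphism $\mathrm{gim}(M_n)\to\mathfrak{g}$ with $e_i\mapsto e_{\alpha_i}$, $f_i\mapsto f_{\alpha_i}$ for $1\le i\le n-1$, and $e_n\mapsto E$, $f_n\mapsto F$.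
   Context: For $n\geq 3$, $M_n=(m_{i,j})$ is the $n\times n$ integer matrix with $m_{i,i}=2$, $m_{i,i+1}=m_{i+1,i}=-1$ ($1\le i\le n-1$), $m_{1,n}=m_{n,1}=1$, all other entries $0$. $\mathrm{gim}(M_n)$ is the complex Lie algebra generated by $e_i,f_i,h_i$ ($1\le i\le n$) with relations: (R1) $[h_i,e_j]=m_{i,j}e_j$, $[h_i,f_j]=-m_{i,j}f_j$, $[e_i,f_i]=h_i$ for all $i,j$; (R2) for $i\ne j$ with $m_{i,j}\le0$: $[e_i,f_j]=0=[f_i,e_j]$, $(\mathrm{ad}\,e_i)^{1-m_{i,j}}e_j=0=(\mathrm{ad}\,f_i)^{1-m_{i,j}}f_j$; (R3) for $i\ne j$ with $m_{i,j}>0$: $[e_i,e_j]=0=[f_i,f_j]$, $(\mathrm{ad}\,e_i)^{m_{i,j}+1}f_j=0=(\mathrm{ad}\,f_i)^{m_{i,j}+1}e_j$. *)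

(* Defs.v *)
From HB Require Import structures.
From mathcomp Require Import all_boot all_order all_algebra.
From mathcomp Require Import complex.
From mathcomp Require Import Rstruct.
Set Implicit Arguments. Unset Strict Implicit. Unset Printing Implicit Defensive.
Import Order.TTheory GRing.Theory Num.Theory.
Local Open Scope ring_scope.

Definition C : fieldType := complex Rdefinitions.R.

Definition is_lie (L : lmodType C) (br : L -> L -> L) : Prop :=
  [/\ (forall (a : C) (x y z : L), br (a *: x + y) z = a *: br x z + br y z),
      (forall (a : C) (x y z : L), br z (a *: x + y) = a *: br z x + br z y),
      (forall x : L, br x x = 0) &
      (forall x y z : L, br x (br y z) + br y (br z x) + br z (br x y) = 0)].

Definition lie_hom (L1 L2 : lmodType C) (br1 : L1 -> L1 -> L1)
  (br2 : L2 -> L2 -> L2) (phi : L1 -> L2) : Prop :=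
  (forall (a : C) (x y : L1), phi (a *: x + y) = a *: phi x + phi y) /\
  (forall x y : L1, phi (br1 x y) = br2 (phi x) (phi y)).

Definition adpow (L : Type) (br : L -> L -> L) (k : nat) (x y : L) : L :=
  iter k (br x) y.

(* The matrix M_n, 0-indexed: indices 0..n-1 stand for 1..n. *)
Definition Mn (n : nat) (i j : 'I_n) : int :=
  if i == j then 2%:Z
  else if ((i == 0%N :> nat) && (j == n.-1 :> nat)) ||
          ((j == 0%N :> nat) && (i == n.-1 :> nat)) then 1%:Z
  else if (i.+1 == j :> nat) || (j.+1 == i :> nat) then (- 1%:Z)
  else 0%:Z.

Definition gim_rels (n : nat) (L : lmodType C) (br : L -> L -> L)
  (e f h : 'I_n -> L) : Prop :=
  (forall i j, br (h i) (e j) = (Mn i j)%:~R *: e j) /\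
  (forall i j, br (h i) (f j) = - ((Mn i j)%:~R *: f j)) /\
  (forall i, br (e i) (f i) = h i) /\
  (forall i j, i != j -> (Mn i j <= 0)%R ->
     [/\ br (e i) (f j) = 0, br (f i) (e j) = 0,
         adpow br (absz (1 - Mn i j)) (e i) (e j) = 0 &
         adpow br (absz (1 - Mn i j)) (f i) (f j) = 0]) /\
  (forall i j, i != j -> (0 < Mn i j)%R ->
     [/\ br (e i) (e j) = 0, br (f i) (f j) = 0,
         adpow br (absz (Mn i j + 1)) (e i) (f j) = 0 &
         adpow br (absz (Mn i j + 1)) (f i) (e j) = 0]).

(* (G, brG, eG, fG, hG) is gim(M_n): the Lie algebra presented by generators
   e_i, f_i, h_i and relations (R1)-(R3), characterised by its universal
   property. *)
Definition is_gim (n : nat) (G : lmodType C) (brG : G -> G -> G)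
  (eG fG hG : 'I_n -> G) : Prop :=
  is_lie brG /\ gim_rels brG eG fG hG /\
  forall (L : lmodType C) (br : L -> L -> L) (e f h : 'I_n -> L),
    is_lie br -> gim_rels br e f h ->
    exists phi : G -> L,
      [/\ lie_hom brG br phi,
          (forall i, phi (eG i) = e i), (forall i, phi (fG i) = f i),
          (forall i, phi (hG i) = h i) &
          (forall psi : G -> L, lie_hom brG br psi ->
             (forall i, psi (eG i) = e i) -> (forall i, psi (fG i) = f i) ->
             (forall i, psi (hG i) = h i) -> forall x, psi x = phi x)].

(* Cartan matrix of type D_n, 0-indexed, with the labeling of the paper:
   nodes 0 - 1 - ... - (n-2) form a chain, node n-1 is joined only to node 1. *)
Definition cartanD (n : nat) (i j : 'I_n) : int :=
  if i == j then 2%:Z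
  else if [&& (i < n.-1)%N, (j < n.-1)%N & (i.+1 == j :> nat) || (j.+1 == i :> nat)]
    then (- 1%:Z)
  else if ((i == 1%N :> nat) && (j == n.-1 :> nat)) ||
          ((j == 1%N :> nat) && (i == n.-1 :> nat)) then (- 1%:Z)
  else 0%:Z.

Definition lie_generates (L : lmodType C) (br : L -> L -> L) (S : L -> Prop) : Prop :=
  forall P : L -> Prop,
    (forall x, S x -> P x) -> P 0 ->
    (forall (a : C) x y, P x -> P y -> P (a *: x + y)) ->
    (forall x y, P x -> P y -> P (br x y)) ->
    forall x, P x.

(* (g, br, e, f) is the simple Lie algebra of type D_n with Chevalley
   generators e_i = e_{alpha_i}, f_i = f_{alpha_i}: by Serre's theorem this is
   exactly a nonzero Lie algebra generated by e_i, f_i satisfying the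
   Chevalley--Serre relations for the Cartan matrix of D_n (h_i = [e_i, f_i]). *)
Definition chevalley_Dn (n : nat) (g : lmodType C) (br : g -> g -> g)
  (e f : 'I_n -> g) : Prop :=
  let h i := br (e i) (f i) in
  is_lie br /\
  (exists x : g, x != 0) /\
  lie_generates br (fun x => exists i, x = e i \/ x = f i) /\
  (forall i j, br (h i) (h j) = 0) /\
  (forall i j, br (h i) (e j) = (cartanD i j)%:~R *: e j) /\
  (forall i j, br (h i) (f j) = - ((cartanD i j)%:~R *: f j)) /\
  (forall i j, i != j -> br (e i) (f j) = 0) /\
  (forall i j, i != j ->
     adpow br (absz (1 - cartanD i j)) (e i) (e j) = 0 /\
     adpow br (absz (1 - cartanD i j)) (f i) (f j) = 0).

(* E = [f_{n-1},[ ... ,[f_2, f_n] ...]]  (1-indexed), i.e. 0-indexed: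
   start from f_(n-1), then bracket on the left with f_1, ..., f_(n-2). *)
Definition Eelt (n : nat) (g : Type) (br : g -> g -> g) (f : 'I_n.+1 -> g) : g :=
  foldl (fun x k => br (f (inord k)) x) (f ord_max) (iota 1 (n.-1)).

Definition Felt (n : nat) (g : Type) (br : g -> g -> g) (e : 'I_n.+1 -> g) : g :=
  foldl (fun x k => br x (e (inord k))) (e ord_max) (iota 1 (n.-1)).

(* Main.v *)
Require Import Defs.
From HB Require Import structures.
From mathcomp Require Import all_boot all_order all_algebra.
From mathcomp Require Import zify complex Rstruct.
Import Order.TTheory GRing.Theory Num.Theory.
Set Implicit Arguments. Unset Strict Implicit. Unset Printing Implicit Defensive.
Local Open Scope ring_scope.

Definition adjD (n i j : nat) : bool :=
  [|| [&& (i < n)%N, (j < n)%N & (i.+1 == j) || (j.+1 == i)],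
      (i == 1%N) && (j == n) | (j == 1%N) && (i == n)].
Definition cd (n i j : nat) : int :=
  if i == j then 2%:Z else if adjD n i j then (- 1%:Z) else 0%:Z.

Fixpoint sumS {V : zmodType} (n : nat) (c : nat -> V) (m : nat) : V :=
  match m with 0 => c n | m'.+1 => sumS n c m' + c m'.+1 end.

Definition wsZ n i m := sumS n (cd n i) m.

Lemma wsZ_closed n i m : (2 <= n)%N -> (1 <= m)%N -> (m <= n.-1)%N -> (i <= n)%N ->
  wsZ n i m = if i == n then 1 else if i == 0%N then -1 else if (i < m)%N then 0
    else if i == m then 1 else if i == m.+1 then -1 else 0.
Proof.
move=> hn; elim: m => [//|m IH] _ hm hi.
case: m IH hm => [|m] IH hm.
  rewrite /wsZ /= /cd /adjD.
  repeat case: ifP; move=> *; lia.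
have -> : wsZ n i m.+2 = wsZ n i m.+1 + cd n i m.+2 by [].
rewrite IH //; last by lia.
rewrite /cd /adjD.
repeat case: ifP; move=> *; lia.
Qed.

Lemma sumS_Nintr n (c : nat -> int) m :
  sumS n (fun l => - ((c l)%:~R : C)) m = - ((sumS n c m)%:~R).
Proof. by elim: m => [|m IH] //=; rewrite IH intrD opprD. Qed.
Lemma sumS_intr n (c : nat -> int) m :
  sumS n (fun l => ((c l)%:~R : C)) m = ((sumS n c m)%:~R).
Proof. by elim: m => [|m IH] //=; rewrite IH intrD. Qed.
Lemma eq_sumS {V : zmodType} n (c d : nat -> V) m : (forall l, c l = d l) -> sumS n c m = sumS n d m.
Proof. by move=> h; elim: m => [|m IH] /=; rewrite ?IH h. Qed.
Lemma cd_sym n i j : cd n i j = cd n j i.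
Proof. rewrite /cd /adjD; repeat case: ifP; move=> *; lia. Qed.
Lemma ws_pred n i : (2 <= n)%N -> (1 <= i)%N -> (i <= n.-1)%N -> wsZ n i i.-1 = -1.
Proof.
move=> hn; case: i => [//|i] _ hi /=; case: i hi => [|i] hi.
  rewrite /wsZ /= /cd /adjD; repeat case: ifP; move=> *; lia.
rewrite wsZ_closed //; try lia.
repeat case: ifP; move=> *; lia.
Qed.
Lemma iota_rcons a m : iota a m.+1 = rcons (iota a m) (a + m)%N.
Proof.
elim: m a => [|m IH] a; first by rewrite /= addn0.
change (a :: iota a.+1 m.+1 = rcons (a :: iota a.+1 m) (a + m.+1)%N).
by rewrite IH /= addSnnS.
Qed.
Lemma Nm1 : ((-1 : int)%:~R : C) = -1.
Proof. by rewrite rmorphN1. Qed.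

Section LieBasic.
Variables (L : lmodType C) (br : L -> L -> L).
Hypothesis HL : is_lie br.

Lemma brDl x y z : br (x + y) z = br x z + br y z.
Proof. by move: HL; rewrite /is_lie => -[H _ _ _]; have := H 1 x y z; rewrite !scale1r. Qed.
Lemma brDr x y z : br z (x + y) = br z x + br z y.
Proof. by move: HL; rewrite /is_lie => -[_ H _ _]; have := H 1 x y z; rewrite !scale1r. Qed.
Lemma br0l z : br 0 z = 0.
Proof. by apply: (addrI (br 0 z)); rewrite -brDl !addr0. Qed.
Lemma br0r z : br z 0 = 0.
Proof. by apply: (addrI (br z 0)); rewrite -brDr !addr0. Qed.
Lemma brZl a x z : br (a *: x) z = a *: br x z.
Proof. by move: HL; rewrite /is_lie => -[H _ _ _]; have := H a x 0 z; rewrite !addr0 br0l addr0. Qed.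
Lemma brZr a x z : br z (a *: x) = a *: br z x.
Proof. by move: HL; rewrite /is_lie => -[_ H _ _]; have := H a x 0 z; rewrite !addr0 br0r addr0. Qed.
Lemma brNl x z : br (- x) z = - br x z.
Proof. by rewrite -scaleN1r brZl scaleN1r. Qed.
Lemma brNr x z : br z (- x) = - br z x.
Proof. by rewrite -scaleN1r brZr scaleN1r. Qed.
Lemma brBl x y z : br (x - y) z = br x z - br y z.
Proof. by rewrite brDl brNl. Qed.
Lemma brBr x y z : br z (x - y) = br z x - br z y.
Proof. by rewrite brDr brNr. Qed.
Lemma brxx x : br x x = 0.
Proof. by move: HL; rewrite /is_lie => -[]. Qed.
Lemma brA x y : br x y = - br y x.
Proof.
have := brxx (x + y); rewrite brDl !brDr !brxx add0r addr0 => /eqP.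
by rewrite addr_eq0 => /eqP.
Qed.
Lemma jac x y z : br x (br y z) = br (br x y) z + br y (br x z).
Proof.
move: HL; rewrite /is_lie => -[_ _ _ J]; have := J x y z.
rewrite [br z x]brA brNr [br z (br x y)]brA.
move/eqP; rewrite -addrA -opprD addr_eq0 opprK => /eqP ->.
by rewrite addrC.
Qed.
Lemma jacl x y z : br (br x y) z = br x (br y z) - br y (br x z).
Proof. by rewrite jac addrK. Qed.
Lemma br_comm x y z : br x y = 0 -> br x (br y z) = br y (br x z).
Proof. by move=> h; rewrite jac h br0l add0r. Qed.
Lemma two_neq0 : (2%:R : C) != 0.
Proof. have := (@pnatr_eq0 (complex Rdefinitions.R) 2). simpl. move=> h.  exact: negbT h. Qed.
Lemma half0 (v : L) : v = - v -> v = 0.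
Proof.
move=> h; have h2 : (2%:R : C) *: v = 0 by rewrite scaler_nat mulr2n {1}h addNr.
have : (2%:R : C)^-1 *: ((2%:R : C) *: v) = 0 by rewrite h2 scaler0.
by rewrite scalerA mulVf ?scale1r // two_neq0.
Qed.
Lemma quad0 x y z : br x (br x y) = 0 -> br x (br x (br y z)) = 0 ->
  br y (br x (br x z)) = 0 -> br x (br y (br x z)) = 0.
Proof.
move=> hxy h1 h2.
have H0 : br (br x (br x y)) z = 0 by rewrite hxy br0l.
rewrite (jacl x (br x y) z) (jacl x y z) brBr (jacl x y (br x z)) h1 h2 in H0.
rewrite sub0r subr0 in H0.
apply: half0; apply/eqP; rewrite -addr_eq0 -oppr_eq0 opprD; exact/eqP.
Qed.
Lemma Qlem x X U : br x (br x X) = 0 -> br x (br x U) = 0 -> br X U = 0 ->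
  br (br x X) (br x U) = 0.
Proof.
move=> h1 h2 h3; rewrite jacl h2 br0r subr0; apply: quad0.
- exact: h1.
- by rewrite h3 !br0r.
- by rewrite h2 br0r.
Qed.
End LieBasic.
Ltac sc := rewrite ?/adjD; lia.


Definition chevH n (L : lmodType C) (br : L -> L -> L) (e f : 'I_n.+1 -> L) : Prop :=
  [/\ is_lie br,
   (forall i j, br (br (e i) (f i)) (e j) = (cartanD i j)%:~R *: e j),
   (forall i j, br (br (e i) (f i)) (f j) = - ((cartanD i j)%:~R *: f j)),
   (forall i j, i != j -> br (e i) (f j) = 0) &
   (forall i j, i != j ->
     adpow br (absz (1 - cartanD i j)) (e i) (e j) = 0 /\
     adpow br (absz (1 - cartanD i j)) (f i) (f j) = 0)].

Section Chev.
Variables (n : nat) (L : lmodType C) (br : L -> L -> L) (e f : 'I_n.+1 -> L).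
Hypothesis hn : (2 <= n)%N.
Hypothesis HC : @chevH n L br e f.
Lemma HL : is_lie br. Proof. by case: HC. Qed.
Lemma Hhe : forall i j, br (br (e i) (f i)) (e j) = (cartanD i j)%:~R *: e j.
Proof. by case: HC. Qed.
Lemma Hhf : forall i j, br (br (e i) (f i)) (f j) = - ((cartanD i j)%:~R *: f j).
Proof. by case: HC. Qed.
Lemma Hef : forall i j, i != j -> br (e i) (f j) = 0.
Proof. by case: HC. Qed.
Lemma Hser : forall i j, i != j ->
  adpow br (absz (1 - cartanD i j)) (e i) (e j) = 0 /\
  adpow br (absz (1 - cartanD i j)) (f i) (f j) = 0.
Proof. by case: HC. Qed.

Definition Fn k := f (inord k).
Definition En k := e (inord k).
Local Notation Hn k := (br (En k) (Fn k)).

Lemma cartan_cd (i j : 'I_n.+1) : cartanD i j = cd n i j.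
Proof. rewrite /cartanD /cd /adjD /=; change (i == j) with (nat_of_ord i == nat_of_ord j). by case: ifP => // _; case: ifP. Qed.

Lemma cartanN i j : (i <= n)%N -> (j <= n)%N -> cartanD (inord i : 'I_n.+1) (inord j) = cd n i j.
Proof. by move=> hi hj; rewrite cartan_cd !inordK. Qed.

Lemma inord_neq i j : (i <= n)%N -> (j <= n)%N -> i != j -> (inord i : 'I_n.+1) != inord j.
Proof. by move=> hi hj hij; apply/eqP => /(congr1 (@nat_of_ord _)); rewrite !inordK //; apply/eqP. Qed.

Lemma fhf i j : (i <= n)%N -> (j <= n)%N -> br (Hn i) (Fn j) = - ((cd n i j)%:~R *: Fn j).
Proof. by move=> hi hj; rewrite /En /Fn Hhf cartanN. Qed.
Lemma fhe i j : (i <= n)%N -> (j <= n)%N -> br (Hn i) (En j) = (cd n i j)%:~R *: En j.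
Proof. by move=> hi hj; rewrite /En /Fn Hhe cartanN. Qed.
Lemma fef i j : (i <= n)%N -> (j <= n)%N -> i != j -> br (En i) (Fn j) = 0.
Proof. by move=> hi hj hij; rewrite /En /Fn Hef // inord_neq. Qed.
Lemma fcomm i j : (i <= n)%N -> (j <= n)%N -> i != j -> ~~ adjD n i j -> br (Fn i) (Fn j) = 0.
Proof.
move=> hi hj hij ha; have [_ ] := Hser (inord_neq hi hj hij).
by rewrite cartanN // /cd (negbTE hij) (negbTE ha).
Qed.
Lemma fser i j : (i <= n)%N -> (j <= n)%N -> i != j -> adjD n i j ->
  br (Fn i) (br (Fn i) (Fn j)) = 0.
Proof.
move=> hi hj hij ha; have [_ ] := Hser (inord_neq hi hj hij).
by rewrite cartanN // /cd (negbTE hij) ha.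
Qed.

Fixpoint Ek m := match m with 0 => Fn n | m'.+1 => br (Fn m'.+1) (Ek m') end.
Fixpoint Fk m := match m with 0 => En n | m'.+1 => br (Fk m') (En m'.+1) end.

Lemma commE x m : br x (Fn n) = 0 -> (forall l, (1 <= l <= m)%N -> br x (Fn l) = 0) ->
  br x (Ek m) = 0.
Proof.
move=> h0; elim: m => [|m IH] hl //=.
have h1 : br x (Fn m.+1) = 0 by apply: hl; lia.
have h2 : br x (Ek m) = 0 by apply: IH => l hl'; apply: hl; lia.
by rewrite (jac HL) // h1 h2 (br0l HL) (br0r HL) addr0.
Qed.

Lemma commF x m : br x (En n) = 0 -> (forall l, (1 <= l <= m)%N -> br x (En l) = 0) ->
  br x (Fk m) = 0.
Proof.
move=> h0; elim: m => [|m IH] hl //=.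
have h1 : br x (En m.+1) = 0 by apply: hl; lia.
have h2 : br x (Fk m) = 0 by apply: IH => l hl'; apply: hl; lia.
by rewrite (jac HL) // h1 h2 (br0l HL) (br0r HL) addr0.
Qed.

Lemma weightE x c m : br x (Fn n) = c n *: Fn n ->
  (forall l, (1 <= l <= m)%N -> br x (Fn l) = c l *: Fn l) ->
  br x (Ek m) = sumS n c m *: Ek m.
Proof.
move=> h0; elim: m => [|m IH] hl //=.
have h1 : br x (Fn m.+1) = c m.+1 *: Fn m.+1 by apply: hl; lia.
have h2 : br x (Ek m) = sumS n c m *: Ek m by apply: IH => l hl'; apply: hl; lia.
by rewrite (jac HL) // h1 h2 (brZl HL) // (brZr HL) // scalerDl addrC.
Qed.

Lemma Bsq m : (m.+1 <= n.-1)%N -> br (Fn m.+1) (br (Fn m.+1) (Ek m)) = 0.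
Proof.
case: m => [|m] hm /=; first by apply: fser; sc.
set x := Fn m.+2.
have hc : br x (Ek m) = 0.
  apply: commE; first by apply: fcomm; sc.
  by move=> l hl; apply: fcomm; sc.
rewrite (jac HL x (Fn m.+1) (Ek m)) // hc (br0r HL) // addr0.
rewrite (jac HL x (br x (Fn m.+1)) (Ek m)) // hc (br0r HL) // addr0.
by rewrite /x fser ?(br0l HL) //; sc.
Qed.

Lemma Akill m l : (1 <= m)%N -> (m <= n.-1)%N -> (l == n) || (1 <= l <= m)%N ->
  br (Fn l) (Ek m) = 0.
Proof.
elim: m l => [//|m IH] l _ hm hl.
case: (eqVneq l m.+1) => [->|hl1]; first exact: Bsq.
case: m IH hm hl hl1 => [|m] IH hm hl hl1.
  have -> : l = n by lia.
  rewrite /= [br (Fn 1) (Fn n)](brA HL) // (brNr HL) // fser ?oppr0 //; sc.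
have IHl : br (Fn l) (Ek m.+1) = 0 by apply: IH => //; lia.
change (br (Fn l) (br (Fn m.+2) (Ek m.+1)) = 0).
rewrite (jac HL) // IHl (br0r HL) // addr0.
case: (eqVneq l m.+1) => [El|hl2]; last by rewrite fcomm ?(br0l HL) //; sc.
rewrite El in IHl *.
set x := Fn m.+2; set y := Fn m.+1; set u := br y x.
have hY : br x (Ek m) = 0.
  apply: commE; first by apply: fcomm; sc.
  by move=> l' hl'; apply: fcomm; sc.
have hu1 : br u y = 0 by rewrite /u (brA HL) // fser ?oppr0 //; sc.
have hu2 : br u (Ek m) = - Ek m.+2 by rewrite /u (jacl HL) // hY (br0r HL) // sub0r.
change (br u (br y (Ek m)) = 0).
apply: half0.
rewrite {1}(jac HL u y (Ek m)) // hu1 (br0l HL) // add0r hu2 (brNr HL) //; congr (- _).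
change (br y (br x (Ek m.+1)) = br u (br y (Ek m))).
by rewrite (jac HL) // IHl (br0r HL) // addr0.
Qed.

Lemma EEk m k : (1 <= m)%N -> (m <= n.-1)%N -> (k <= m)%N -> br (Ek m) (Ek k) = 0.
Proof.
move=> h1 h2; elim: k => [|k IH] hk.
  by rewrite (brA HL) /= (Akill h1 h2) ?oppr0 ?eqxx.
change (br (Ek m) (br (Fn k.+1) (Ek k)) = 0).
rewrite (jac HL) // IH; last by lia.
rewrite (br0r HL) addr0 [br (Ek m) (Fn k.+1)](brA HL) (Akill h1 h2) ?oppr0 ?(br0l HL) //; lia.
Qed.

Lemma T6 m : (1 <= m)%N -> (m <= n.-1)%N -> br (Ek m) (br (Ek m) (Fn 0)) = 0.
Proof.
elim: m => [//|m IH] _ hm.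
case: m IH hm => [|m] IH hm.
  rewrite /=.
  set a := Fn 0; set b := Fn 1; set c := Fn n.
  have hca : br c a = 0 by apply: fcomm; sc.
  have hcb : br c (br c b) = 0 by apply: fser; sc.
  have hba : br b (br b a) = 0 by apply: fser; sc.
  set p := br a b.
  have s1 : br (br b c) a = br c p.
    by rewrite (jacl HL) // hca (br0r HL) // sub0r [br b a](brA HL) // (brNr HL) // opprK.
  rewrite s1 (jac HL) //.
  have s2 : br (br b c) c = 0 by rewrite (brA HL) // [br b c](brA HL) // (brNr HL) // hcb oppr0 oppr0.
  have hbp : br b p = 0 by rewrite /p [br a b](brA HL) // (brNr HL) // hba oppr0.
  rewrite s2 (br0l HL) // add0r (jacl HL) // hbp (br0r HL) // subr0.
  apply: (quad0 HL) => //; first by rewrite hbp !(br0r HL).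
  by rewrite /p (br_comm HL _ hca) (br_comm HL _ hca) hcb !(br0r HL).
set x := Fn m.+2; set X := Ek m.+1.
have hx0 : br x (Fn 0) = 0 by apply: fcomm; sc.
change (br (br x X) (br (br x X) (Fn 0)) = 0).
rewrite (jacl HL x X (Fn 0)) // hx0 (br0r HL) // subr0.
apply: (Qlem HL) => //.
- exact: Bsq.
- rewrite (jac HL x X (Fn 0)) hx0 (br0r HL) addr0.
  rewrite (jac HL x (br x X) (Fn 0)) hx0 (br0r HL) addr0.
  by rewrite /x /X (Bsq hm) (br0l HL).
- by apply: IH => //; lia.
Qed.

Lemma S4 m : (1 <= m)%N -> (m <= n.-1)%N -> br (Fn 0) (br (Fn 0) (Ek m)) = 0.
Proof.
elim: m => [//|m IH] _ hm; case: m IH hm => [|m] IH hm.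
  rewrite /=; set a := Fn 0; set b := Fn 1; set c := Fn n.
  have hac : br a c = 0 by apply: fcomm; sc.
  rewrite (jac HL a b c) hac (br0r HL) addr0 (jac HL a (br a b) c) hac (br0r HL) addr0.
  by rewrite /a /b fser ?(br0l HL) //; sc.
have hax : br (Fn 0) (Fn m.+2) = 0 by apply: fcomm; sc.
change (br (Fn 0) (br (Fn 0) (br (Fn m.+2) (Ek m.+1))) = 0).
rewrite (br_comm HL _ hax) (br_comm HL _ hax) IH ?(br0r HL) //; lia.
Qed.

Lemma Dlem i : (1 <= i)%N -> (i <= n.-1)%N -> br (En i) (Ek i) = Ek i.-1.
Proof.
case: i => [//|i] _ hi; change (br (En i.+1) (br (Fn i.+1) (Ek i)) = Ek i).
rewrite (jac HL).
have hc : br (En i.+1) (Ek i) = 0.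
  apply: commE; first by apply: fef; sc.
  by move=> l hl; apply: fef; sc.
rewrite hc (br0r HL) addr0.
rewrite (weightE (c := fun l => - (cd n i.+1 l)%:~R)).
- have hw : wsZ n i.+1 i = -1 by apply: (ws_pred hn) => //; lia.
  rewrite sumS_Nintr; rewrite /wsZ in hw; rewrite hw.
  by rewrite Nm1 opprK scale1r.
- by rewrite fhf ?scaleNr //; lia.
- by move=> l hl; rewrite fhf ?scaleNr //; lia.
Qed.

Lemma S2 i : (i <= n.-2)%N -> br (En i) (Ek n.-1) = 0.
Proof.
case: i => [|i] hi.
  apply: commE; first by apply: fef; sc.
  by move=> l hl; apply: fef; sc.
suff H : forall k, (i.+2 + k <= n.-1)%N -> br (En i.+1) (Ek (i.+2 + k)) = 0.
  have := H (n.-1 - i.+2)%N; rewrite subnKC; last by lia.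
  by apply.
elim=> [|k IH] hk.
  rewrite addn0; change (br (En i.+1) (br (Fn i.+2) (Ek i.+1)) = 0).
  have h1 : br (En i.+1) (Fn i.+2) = 0 by apply: fef; sc.
  rewrite (jac HL) h1 (br0l HL) add0r (Dlem (i := i.+1)) /=; try lia.
  apply: commE; first by apply: fcomm; sc.
  by move=> l hl; apply: fcomm; sc.
rewrite addnS; change (br (En i.+1) (br (Fn (i.+2 + k).+1) (Ek (i.+2 + k))) = 0).
have h1 : br (En i.+1) (Fn (i.+2 + k).+1) = 0 by apply: fef; sc.
rewrite (jac HL) h1 (br0l HL) add0r IH ?(br0r HL) //; lia.
Qed.

Lemma S3 : br (En n.-1) (br (En n.-1) (Ek n.-1)) = 0.
Proof.
rewrite Dlem; try lia.
apply: commE; first by apply: fef; sc.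
by move=> l hl; apply: fef; sc.
Qed.

Lemma S5 : br (Ek n.-1) (br (Ek n.-1) (En n.-1)) = 0.
Proof.
rewrite [br (Ek n.-1) (En n.-1)](brA HL) Dlem; try lia.
rewrite (brNr HL) EEk ?oppr0 //; lia.
Qed.

Lemma S7 i : (i <= n)%N -> br (Hn i) (Ek n.-1) = - ((wsZ n i n.-1)%:~R) *: Ek n.-1.
Proof.
move=> hi; rewrite (weightE (c := fun l => - (cd n i l)%:~R)) ?sumS_Nintr //.
- by rewrite fhf ?scaleNr.
- by move=> l hl; rewrite fhf ?scaleNr //; lia.
Qed.

Definition Hs m := sumS n (fun k => Hn k) m.

Lemma HsW y c m : (forall k, (k == n) || (1 <= k <= m)%N -> br (Hn k) y = c k *: y) ->
  br (Hs m) y = sumS n c m *: y.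
Proof.
elim: m => [|m IH] h /=; first by apply: h; rewrite eqxx.
rewrite (brDl HL) -/(Hs m) IH; last by move=> k hk; apply: h; lia.
by rewrite h ?scalerDl //; lia.
Qed.

Lemma S8 m : (m <= n.-1)%N -> br (Ek m) (Fk m) = - Hs m.
Proof.
elim: m => [|m IH] hm /=; first by rewrite (brA HL).
set x := Fn m.+1; set y := En m.+1.
rewrite (jac HL (br x (Ek m)) (Fk m) y).
have hEy : br (br x (Ek m)) y = - Ek m.
  rewrite (brA HL); change (- br (En m.+1) (Ek m.+1) = - Ek m).
  by rewrite Dlem //; lia.
have hxF : br x (Fk m) = 0.
  apply: commF; first by rewrite (brA HL) fef ?oppr0 //; sc.
  by move=> l hl; rewrite (brA HL) fef ?oppr0 //; sc.
have hHx : br (Hs m) x = x.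
  rewrite (HsW (c := fun k => - (cd n k m.+1)%:~R)).
    rewrite sumS_Nintr (@eq_sumS _ n _ (cd n m.+1) m); last by move=> l; exact: cd_sym.
    have hw : wsZ n m.+1 m = -1 by apply: (ws_pred hn) => //; lia.
    rewrite /wsZ in hw; rewrite hw.
    by rewrite Nm1 opprK scale1r.
  by move=> k hk; rewrite fhf ?scaleNr //; lia.
have t1 : br (br x (Ek m)) (Fk m) = x.
  rewrite (jacl HL x (Ek m) (Fk m)) hxF (br0r HL) subr0 IH; last by lia.
  by rewrite (brNr HL) (brA HL x (Hs m)) opprK hHx.
have t2 : br (Fk m) (br (br x (Ek m)) y) = - Hs m.
  by rewrite hEy (brNr HL) (brA HL (Fk m) (Ek m)) opprK IH //; lia.
rewrite t1 t2 /x /y (brA HL (Fn m.+1)).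
by rewrite opprD addrC.
Qed.

Lemma Eelt_Ek : Eelt br f = Ek n.-1.
Proof.
suff H : forall m, foldl (fun x k => br (f (inord k)) x) (f ord_max) (iota 1 m) = Ek m by apply: H.
elim=> [|m IH].
  by rewrite /= /Fn; congr f; apply: val_inj; rewrite /= inordK.
by rewrite iota_rcons foldl_rcons IH add1n.
Qed.

Lemma Felt_Fk : Felt br e = Fk n.-1.
Proof.
suff H : forall m, foldl (fun x k => br x (e (inord k))) (e ord_max) (iota 1 m) = Fk m by apply: H.
elim=> [|m IH].
  by rewrite /= /En; congr e; apply: val_inj; rewrite /= inordK.
by rewrite iota_rcons foldl_rcons IH add1n.
Qed.

Lemma serN i j : (i <= n)%N -> (j <= n)%N -> i != j ->
  adpow br (absz (1 - cd n i j)) (En i) (En j) = 0 /\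
  adpow br (absz (1 - cd n i j)) (Fn i) (Fn j) = 0.
Proof. by move=> hi hj hij; rewrite -cartanN //; exact: (Hser (inord_neq hi hj hij)). Qed.

Lemma pack :
   (forall l, (1 <= l <= n.-1)%N -> br (Fn l) (Eelt br f) = 0) /\
   (forall i, (i <= n.-2)%N -> br (En i) (Eelt br f) = 0) /\
   br (En n.-1) (br (En n.-1) (Eelt br f)) = 0 /\
   br (Fn 0) (br (Fn 0) (Eelt br f)) = 0 /\
   br (Eelt br f) (br (Eelt br f) (En n.-1)) = 0 /\
   br (Eelt br f) (br (Eelt br f) (Fn 0)) = 0 /\
   (forall i, (i <= n)%N -> br (Hn i) (Eelt br f) = - ((wsZ n i n.-1)%:~R) *: Eelt br f) /\
   br (Eelt br f) (Felt br e) = - Hs n.-1 /\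
   (forall y c, (forall k, (k == n) || (1 <= k <= n.-1)%N -> br (Hn k) y = c k *: y) ->
     br (Hs n.-1) y = sumS n c n.-1 *: y).
Proof.
rewrite Eelt_Ek Felt_Fk; split; [|split; [|split; [|split; [|split; [|split; [|split; [|split]]]]]]].
- by move=> l hl; apply: Akill; lia.
- exact: S2.
- exact: S3.
- by apply: S4; lia.
- exact: S5.
- by apply: T6; lia.
- exact: S7.
- exact: S8.
- move=> y c h; exact: HsW.
Qed.
End Chev.


Definition flipb {T : Type} (b : T -> T -> T) := fun x y => b y x.

Lemma lie_flip (L : lmodType C) (br : L -> L -> L) : is_lie br -> is_lie (flipb br).
Proof.
move=> HL; have k : forall a b c, br (br a b) c = br c (br b a).
  by move=> a b c; rewrite (brA HL) (brA HL a b) (brNr HL) opprK.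
move: (HL); rewrite /is_lie => -[H1 H2 H3 H4].
split=> [a x y z|a x y z|x|x y z]; rewrite /flipb; [exact: H2|exact: H1|exact: H3|].
rewrite !k; exact: H4.
Qed.

Lemma adpow_flip (L : lmodType C) (br : L -> L -> L) (HL : is_lie br) k x y :
  adpow (flipb br) k x y = (-1)^+k *: adpow br k x y.
Proof.
elim: k => [|k IH]; first by rewrite /= scale1r.
change (br (adpow (flipb br) k x y) x = (-1)^+k.+1 *: br x (adpow br k x y)).
by rewrite IH (brZl HL) (brA HL _ x) scalerN exprS mulN1r scaleNr.
Qed.

Lemma chevH_flip n (L : lmodType C) (br : L -> L -> L) (e f : 'I_n.+1 -> L) :
  chevH br e f -> chevH (flipb br) f e.
Proof.
case=> HL H1 H2 H3 H4; split.
- exact: lie_flip.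
- by move=> i j; rewrite /flipb (brA HL) H2 opprK.
- by move=> i j; rewrite /flipb (brA HL) H1.
- by move=> i j hij; rewrite /flipb H3 // eq_sym.
- move=> i j hij; have [a b] := H4 i j hij.
  by split; rewrite (adpow_flip HL) ?a ?b scaler0.
Qed.

Lemma flip2 (L : lmodType C) (br : L -> L -> L) (HL : is_lie br) x y :
  br (br x y) y = br y (br y x).
Proof. by rewrite (brA HL) (brA HL x y) (brNr HL) opprK. Qed.

Definition MN n (i j : nat) : int :=
  if i == j then 2%:Z
  else if ((i == 0%N) && (j == n)) || ((j == 0%N) && (i == n)) then 1%:Z
  else if (i.+1 == j) || (j.+1 == i) then (- 1%:Z)
  else 0%:Z.

Lemma Mn_MN n (i j : 'I_n.+1) : Mn i j = MN n i j.
Proof. by rewrite /Mn /MN /=; change (i == j) with (nat_of_ord i == nat_of_ord j). Qed.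

Lemma MN_cd n i j : (i < n)%N -> (j < n)%N -> MN n i j = cd n i j.
Proof. rewrite /MN /cd /adjD => *; repeat case: ifP; move=> *; lia. Qed.

Lemma MN_in n i : (2 <= n)%N -> (i < n)%N -> MN n i n = - wsZ n i n.-1.
Proof.
move=> hn hi; rewrite wsZ_closed; try lia.
rewrite /MN; repeat case: ifP; move=> *; lia.
Qed.

Lemma MN_ni n j : (2 <= n)%N -> (j < n)%N -> MN n n j = - wsZ n j n.-1.
Proof.
move=> hn hi; rewrite wsZ_closed; try lia.
rewrite /MN; repeat case: ifP; move=> *; lia.
Qed.

Lemma MN_nn n : MN n n n = 2.
Proof. by rewrite /MN eqxx. Qed.

Lemma sum_ws n : (2 <= n)%N -> sumS n (fun k => wsZ n k n.-1) n.-1 = 2.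
Proof.
move=> hn.
suff H : forall p, (p <= n.-1)%N -> sumS n (fun k => wsZ n k n.-1) p = if p == n.-1 then 2 else 1.
  by rewrite H // eqxx.
elim=> [|p IH] hp /=.
  rewrite wsZ_closed; try lia.
  repeat case: ifP; move=> *; lia.
rewrite IH; last by lia.
rewrite wsZ_closed; try lia.
repeat case: ifP; move=> *; lia.
Qed.

Section Main.
Variables (n : nat) (g : lmodType C) (br : g -> g -> g) (e f : 'I_n.+1 -> g).
Hypothesis hn : (2 <= n)%N.
Hypothesis HC : chevH br e f.

Lemma HLm : is_lie br. Proof. by case: HC. Qed.

Local Notation E := (Eelt br f).
Local Notation F := (Felt br e).

Lemma D1 l : (1 <= l <= n.-1)%N -> br F (En e l) = 0.
Proof. by move=> hl; have [h _] := pack hn (chevH_flip HC); exact: h l hl. Qed.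
Lemma D2 i : (i <= n.-2)%N -> br F (Fn f i) = 0.
Proof. by move=> hl; have [_ [h _]] := pack hn (chevH_flip HC); exact: h i hl. Qed.
Lemma D3 : br (br F (Fn f n.-1)) (Fn f n.-1) = 0.
Proof. by have [_ [_ [h _]]] := pack hn (chevH_flip HC); exact: h. Qed.
Lemma D4 : br (br F (En e 0)) (En e 0) = 0.
Proof. by have [_ [_ [_ [h _]]]] := pack hn (chevH_flip HC); exact: h. Qed.
Lemma D5 : br (br (Fn f n.-1) F) F = 0.
Proof. by have [_ [_ [_ [_ [h _]]]]] := pack hn (chevH_flip HC); exact: h. Qed.
Lemma D6 : br (br (En e 0) F) F = 0.
Proof. by have [_ [_ [_ [_ [_ [h _]]]]]] := pack hn (chevH_flip HC); exact: h. Qed.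
Lemma D7 i : (i <= n)%N -> br F (br (En e i) (Fn f i)) = - ((wsZ n i n.-1)%:~R) *: F.
Proof. by move=> hi; have [_ [_ [_ [_ [_ [_ [h _]]]]]]] := pack hn (chevH_flip HC); exact: h i hi. Qed.

Lemma P_all :
   (forall l, (1 <= l <= n.-1)%N -> br (Fn f l) E = 0) /\
   (forall i, (i <= n.-2)%N -> br (En e i) E = 0) /\
   br (En e n.-1) (br (En e n.-1) E) = 0 /\
   br (Fn f 0) (br (Fn f 0) E) = 0 /\
   br E (br E (En e n.-1)) = 0 /\
   br E (br E (Fn f 0)) = 0 /\
   (forall i, (i <= n)%N -> br (br (En e i) (Fn f i)) E = - ((wsZ n i n.-1)%:~R) *: E) /\
   br E F = - Hs br e f n.-1 /\
   (forall y c, (forall k, (k == n) || (1 <= k <= n.-1)%N -> br (br (En e k) (Fn f k)) y = c k *: y) ->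
     br (Hs br e f n.-1) y = sumS n c n.-1 *: y).
Proof. exact: pack hn HC. Qed.

Definition eN k := if k == n then E else En e k.
Definition fN k := if k == n then F else Fn f k.
Definition hN k := br (eN k) (fN k).

Lemma R1a i j : (i <= n)%N -> (j <= n)%N -> br (hN i) (eN j) = (MN n i j)%:~R *: eN j.
Proof.
have [P1 [P2 [P3 [P4 [P5 [P6 [P7 [P8 P9]]]]]]]] := P_all.
move=> hi hj; rewrite /hN /eN /fN.
case: (eqVneq i n) => [->|hin]; case: (eqVneq j n) => [->|hjn].
- rewrite P8 (brNl HLm) (P9 _ (fun k => - ((wsZ n k n.-1)%:~R))).
    by rewrite sumS_Nintr sum_ws // MN_nn scaleNr opprK.
  by move=> k hk; apply: P7; lia.
- rewrite P8 (brNl HLm) (P9 _ (fun k => ((cd n k j)%:~R))).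
    rewrite sumS_intr (@eq_sumS _ n _ (cd n j) n.-1); last by move=> l; exact: cd_sym.
    by rewrite MN_ni //; last lia; rewrite intrN scaleNr.
  by move=> k hk; rewrite (fhe HC) //; lia.
- by rewrite P7 // MN_in ?intrN //; lia.
- by rewrite (fhe HC) // MN_cd //; lia.
Qed.

Lemma R1b i j : (i <= n)%N -> (j <= n)%N -> br (hN i) (fN j) = - ((MN n i j)%:~R *: fN j).
Proof.
have [P1 [P2 [P3 [P4 [P5 [P6 [P7 [P8 P9]]]]]]]] := P_all.
move=> hi hj; rewrite /hN /eN /fN.
case: (eqVneq i n) => [->|hin]; case: (eqVneq j n) => [->|hjn].
- rewrite P8 (brNl HLm) (P9 _ (fun k => ((wsZ n k n.-1)%:~R))).
    by rewrite sumS_intr sum_ws // MN_nn.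
  move=> k hk; rewrite (brA HLm) D7; last by lia.
  by rewrite scaleNr opprK.
- rewrite P8 (brNl HLm) (P9 _ (fun k => - ((cd n k j)%:~R))).
    rewrite sumS_Nintr (@eq_sumS _ n _ (cd n j) n.-1); last by move=> l; exact: cd_sym.
    by rewrite MN_ni //; last lia; rewrite intrN.
  by move=> k hk; rewrite (fhf HC) ?scaleNr //; lia.
- rewrite (brA HLm) D7 //.
  by rewrite MN_in ?intrN ?scaleNr //; lia.
- by rewrite (fhf HC) // MN_cd //; lia.
Qed.

Lemma R2 i j : (i <= n)%N -> (j <= n)%N -> i != j -> (MN n i j <= 0)%R ->
  [/\ br (eN i) (fN j) = 0, br (fN i) (eN j) = 0,
      adpow br (absz (1 - MN n i j)) (eN i) (eN j) = 0 &
      adpow br (absz (1 - MN n i j)) (fN i) (fN j) = 0].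
Proof.
have [P1 [P2 [P3 [P4 [P5 [P6 [P7 [P8 P9]]]]]]]] := P_all.
move=> hi hj hij hM; rewrite /eN /fN.
case: (eqVneq i n) => [Ei|hin]; case: (eqVneq j n) => [Ej|hjn].
- by rewrite Ei Ej eqxx in hij.
- have hj0 : j != 0%N by move: hM; rewrite Ei /MN; repeat case: ifP; move=> *; lia.
  split.
  + by rewrite (brA HLm) P1 ?oppr0 //; lia.
  + by rewrite D1 //; lia.
  + case: (eqVneq j n.-1) => [Ej|hj1].
      rewrite Ei Ej (_ : MN n n n.-1 = -1); last by rewrite /MN; repeat case: ifP; move=> *; lia.
      exact: P5.
    rewrite Ei (_ : MN n n j = 0); last by rewrite /MN; repeat case: ifP; move=> *; lia.
    by rewrite /= (brA HLm) P2 ?oppr0 //; lia.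
  + case: (eqVneq j n.-1) => [Ej|hj1].
      rewrite Ei Ej (_ : MN n n n.-1 = -1); last by rewrite /MN; repeat case: ifP; move=> *; lia.
      by rewrite /= -(flip2 HLm) D5.
    rewrite Ei (_ : MN n n j = 0); last by rewrite /MN; repeat case: ifP; move=> *; lia.
    by rewrite /= D2 //; lia.
- have hi0 : i != 0%N by move: hM; rewrite Ej /MN; repeat case: ifP; move=> *; lia.
  split.
  + by rewrite (brA HLm) D1 ?oppr0 //; lia.
  + by rewrite P1 //; lia.
  + case: (eqVneq i n.-1) => [Ei|hi1].
      rewrite Ei Ej (_ : MN n n.-1 n = -1); last by rewrite /MN; repeat case: ifP; move=> *; lia.
      exact: P3.
    rewrite Ej (_ : MN n i n = 0); last by rewrite /MN; repeat case: ifP; move=> *; lia.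
    by rewrite /= P2 //; lia.
  + case: (eqVneq i n.-1) => [Ei|hi1].
      rewrite Ei Ej (_ : MN n n.-1 n = -1); last by rewrite /MN; repeat case: ifP; move=> *; lia.
      by rewrite /= -(flip2 HLm) D3.
    rewrite Ej (_ : MN n i n = 0); last by rewrite /MN; repeat case: ifP; move=> *; lia.
    by rewrite /= (brA HLm) D2 ?oppr0 //; lia.
- rewrite MN_cd; try lia.
  have [s1 s2] := serN HC hi hj hij.
  split => //.
  + by rewrite (fef HC).
  + by rewrite (brA HLm) (fef HC) ?oppr0 // eq_sym.
Qed.

Lemma R3 i j : (i <= n)%N -> (j <= n)%N -> i != j -> (0 < MN n i j)%R ->
  [/\ br (eN i) (eN j) = 0, br (fN i) (fN j) = 0,
      adpow br (absz (MN n i j + 1)) (eN i) (fN j) = 0 &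
      adpow br (absz (MN n i j + 1)) (fN i) (eN j) = 0].
Proof.
have [P1 [P2 [P3 [P4 [P5 [P6 [P7 [P8 P9]]]]]]]] := P_all.
move=> hi hj hij hM.
have : ((i == 0%N) && (j == n)) || ((i == n) && (j == 0%N)).
  by move: hM; rewrite /MN; repeat case: ifP; move=> *; lia.
case/orP => /andP [/eqP -> /eqP ->].
- rewrite (_ : MN n 0 n = 1); last by rewrite /MN; repeat case: ifP; move=> *; lia.
  rewrite /eN /fN eqxx (_ : (0 == n) = false); last by lia.
  split.
  + by rewrite P2.
  + by rewrite (brA HLm) D2 ?oppr0.
  + by rewrite /= -(flip2 HLm) D4.
  + exact: P4.
- rewrite (_ : MN n n 0 = 1); last by rewrite /MN; repeat case: ifP; move=> *; lia.
  rewrite /eN /fN eqxx (_ : (0 == n) = false); last by lia.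
  split.
  + by rewrite (brA HLm) P2 ?oppr0.
  + by rewrite D2.
  + exact: P6.
  + by rewrite /= -(flip2 HLm) D6.
Qed.

End Main.

Unset Implicit Arguments.

Theorem lemma2p4 (n : nat) (hn : (2 <= n)%N)
  (G : lmodType C) (brG : G -> G -> G) (eG fG hG : 'I_n.+1 -> G)
  (g : lmodType C) (br : g -> g -> g) (e f : 'I_n.+1 -> g) :
  is_gim brG eG fG hG ->
  chevalley_Dn br e f ->
  exists phi : G -> g,
    [/\ lie_hom brG br phi,
        (forall i : 'I_n.+1, i != ord_max -> phi (eG i) = e i),
        (forall i : 'I_n.+1, i != ord_max -> phi (fG i) = f i),
        phi (eG ord_max) = Eelt br f &
        phi (fG ord_max) = Felt br e].
Proof.
move=> [_ [_ Hu]] Hch.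
have HC : chevH br e f.
  by move: Hch; rewrite /chevalley_Dn => -[HL [_ [_ [_ [H1 [H2 [H3 H4]]]]]]]; split.
pose e' := fun i : 'I_n.+1 => eN br e f (val i).
pose f' := fun i : 'I_n.+1 => fN br e f (val i).
pose h' := fun i : 'I_n.+1 => br (e' i) (f' i).
have hle : forall i : 'I_n.+1, (val i <= n)%N by move=> i; have := ltn_ord i.
have Hrel : gim_rels br e' f' h'.
  split; [|split; [|split; [|split]]].
  - by move=> i j; rewrite Mn_MN; exact: (R1a hn HC (hle i) (hle j)).
  - by move=> i j; rewrite Mn_MN; exact: (R1b hn HC (hle i) (hle j)).
  - by [].
  - by move=> i j hij; rewrite Mn_MN => hM; exact: (R2 hn HC (hle i) (hle j) hij hM).
  - by move=> i j hij; rewrite Mn_MN => hM; exact: (R3 hn HC (hle i) (hle j) hij hM).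
have [phi [Hhom He Hf _ _]] := Hu g br e' f' h' (HLm HC) Hrel.
have hneq : forall i : 'I_n.+1, i != ord_max -> (val i == n) = false.
  move=> i hi; apply/negbTE; apply: contra hi => /eqP h.
  by apply/eqP/val_inj.
exists phi; split => //.
- by move=> i hi; rewrite He /e' /eN hneq // /En inord_val.
- by move=> i hi; rewrite Hf /f' /fN hneq // /Fn inord_val.
- by rewrite He /e' /eN /= eqxx.
- by rewrite Hf /f' /fN /= eqxx.
Qed.
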